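(* Let $n,r\ge1$, $\lambda\in\Lambda_\vartriangle(n,r)$ and $d\in\mathscr D^\vartriangle_\lambda$, and let $\mathbf i=\mathbf i_\lambda d$. If $d^+$ denotes the element of maximal length in the coset $\mathfrak S_\lambda d$, then $|\mathrm{Inv}(\mathbf i)|=\ell(d^+)$, where $\mathrm{Inv}(\mathbf i)=\{(s,t)\in\mathbb Z^2\mid 1\le s\le r,\ s<t,\ i_s\ge i_t\}$.
   Context: The affine symmetric group $\mathfrak S_{\vartriangle,r}$ is the group (under composition) of bijections $w:\mathbb Z\to\mathbb Z$ with $w(i+r)=w(i)+r$. It contains $s_i$ ($1\le i\le r$): $s_i(j)=j$ if $j\not\equiv i,i+1\pmod r$, $s_i(j)=j-1$ if $j\equiv i+1$, $s_i(j)=j+1$ if $j\equiv i$; and $\rho:j\mapsto j+1$. The $s_i$ generate a Coxeter group $W$ with length function $\ell$, every element is uniquely $\rho^aw'$ ($w'\in W$), and one sets $\ell(\rho^aw')=\ell(w')$. $\Lambda_\vartriangle(n,r)$ is the set of $\lambda=(\lambda_i)_{i\in\mathbb Z}$ with $\lambda_i\in\mathbb N$, $\lambda_{i+n}=\lambda_i$, $\lambda_1+\dots+\lambda_n=r$. For $1\le i\le n$, $k\in\mathbb Z$ put $\lambda_{k,i-1}=kr+\sum_{t=1}^{i-1}\lambda_t$ and $R^\lambda_{i+kn}=\{\lambda_{k,i-1}+1,\dots,\lambda_{k,i-1}+\lambda_i\}$. $\mathfrak S_\lambda$ is the standard Young subgroup $\mathfrak S_{(\lambda_1,\dots,\lambda_n)}$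 of $\mathfrak S_r$, viewed in $\mathfrak S_{\vartriangle,r}$ by periodic extension, and $\mathscr D^\vartriangle_\lambda=\{d\mid \ell(wd)=\ell(w)+\ell(d)\ \forall w\in\mathfrak S_\lambda\}$. Let $I_\vartriangle(n,r)$ be the set of integer sequences $\mathbf i=(i_k)_{k\in\mathbb Z}$ with $i_{k+r}=i_k+n$; $\mathfrak S_{\vartriangle,r}$ acts on it on the right by $(\mathbf iw)_k=i_{w(k)}$. $\mathbf i_\lambda\in I_\vartriangle(n,r)$ is the sequence with $(\mathbf i_\lambda)_s=m$ for all $s\in R^\lambda_m$, $m\in\mathbb Z$. *)

(* Defs.v *)
From HB Require Import structures.
From mathcomp Require Import all_boot all_order all_algebra.
From Stdlib Require Import ClassicalEpsilon.
Set Implicit Arguments. Unset Strict Implicit. Unset Printing Implicit Defensive.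
Import Order.TTheory GRing.Theory Num.Theory.
Local Open Scope ring_scope.

Definition affine_perm (r : nat) (w : int -> int) : Prop :=
  bijective w /\ forall i : int, w (i + r%:Z) = w i + r%:Z.

Definition s_gen (r : nat) (i : nat) (j : int) : int :=
  if ((j - i%:Z - 1) %% r%:Z)%Z == 0 then j - 1
  else if ((j - i%:Z) %% r%:Z)%Z == 0 then j + 1
  else j.

Definition word (r : nat) (js : seq nat) : int -> int :=
  foldr (fun i f => s_gen r i \o f) id js.

(* w = rho^a o s_{j_1} o ... o s_{j_k} for some a and some word of length k *)
Definition has_word_of_length (r : nat) (w : int -> int) (k : nat) : Prop :=
  exists (a : int) (js : seq nat),
    size js = k /\ all (fun i => (1 <= i <= r)%N) js /\
    forall x, w x = word r js x + a.

(* Coxeter length: l(rho^a w') = l(w') = minimal number of generators s_i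
   in an expression of w' (since rho^a w' is unique, this equals the minimal
   k with w = rho^a s_{j1} ... s_{jk}). *)
Definition ell (r : nat) (w : int -> int) : nat :=
  epsilon (inhabits 0%N)
    (fun k => has_word_of_length r w k /\
              forall k', has_word_of_length r w k' -> (k <= k')%N).

Definition in_Lambda (n r : nat) (lam : int -> nat) : Prop :=
  (forall i : int, lam (i + n%:Z) = lam i) /\
  (\sum_(1 <= t < n.+1) lam t%:Z)%N = r.

(* s \in R^lambda_m, where R^lambda_{i + k n} =
   { lambda_{k,i-1} + 1, ..., lambda_{k,i-1} + lambda_i },
   lambda_{k,i-1} = k r + sum_{t=1}^{i-1} lambda_t  (1 <= i <= n, k in Z) *)
Definition inR (n r : nat) (lam : int -> nat) (m s : int) : Prop :=
  exists (k : int) (i : nat),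
    (1 <= i <= n)%N /\ m = i%:Z + k * n%:Z /\
    k * r%:Z + (\sum_(1 <= t < i) lam t%:Z)%N%:Z < s /\
    s <= k * r%:Z + (\sum_(1 <= t < i) lam t%:Z)%N%:Z + (lam i%:Z)%:Z.

Definition is_ilambda (n r : nat) (lam : int -> nat) (ilam : int -> int) : Prop :=
  forall m s : int, inR n r lam m s -> ilam s = m.

Definition in_Young (n r : nat) (lam : int -> nat) (w : int -> int) : Prop :=
  affine_perm r w /\
  forall (i : nat) (s : int), (1 <= i <= n)%N ->
    inR n r lam i%:Z s -> inR n r lam i%:Z (w s).

Definition in_D (n r : nat) (lam : int -> nat) (d : int -> int) : Prop :=
  affine_perm r d /\
  forall w, in_Young n r lam w -> ell r (w \o d) = (ell r w + ell r d)%N.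

Definition coset_max (n r : nat) (lam : int -> nat) (d dp : int -> int) : Prop :=
  (exists w, in_Young n r lam w /\ forall x, dp x = w (d x)) /\
  forall w, in_Young n r lam w -> (ell r (w \o d) <= ell r dp)%N.

Definition Inv (r : nat) (i : int -> int) (p : int * int) : Prop :=
  1 <= p.1 <= r%:Z /\ p.1 < p.2 /\ i p.2 <= i p.1.

Definition has_card (P : int * int -> Prop) (c : nat) : Prop :=
  exists s : seq (int * int), uniq s /\ (forall p, p \in s <-> P p) /\ size s = c.

(* Main.v *)
Require Import Defs.
From mathcomp Require Import all_boot all_order all_algebra.
From mathcomp Require Import zify ring lra.
From Stdlib Require Import ClassicalEpsilon FunctionalExtensionality.
Set Implicit Arguments. Unset Strict Implicit. Unset Printing Implicit Defensive.
Import Order.TTheory GRing.Theory Num.Theory.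
Local Open Scope ring_scope.

Lemma small_mul (q z : int) (r : nat) : z = q * r%:Z -> - r%:Z < z < r%:Z -> q = 0.
Proof. move=> -> h. have [q0|q0|q0] := ltgtP q 0; last by [].
- have : q * r%:Z <= - r%:Z by nia. lia.
- have : r%:Z <= q * r%:Z by nia. lia.
Qed.

Lemma modE (x : int) (r : nat) : (0 < r)%N -> (x %% r%:Z)%Z = 0 <-> exists q, x = q * r%:Z.
Proof. move=> hr; split.
- move=> h; exists (x %/ r%:Z)%Z; rewrite {1}(divz_eq x r%:Z) h addr0 //.
- case=> q ->; rewrite -(addr0 (q * r%:Z)) modzMDl; exact: mod0z.
Qed.

Lemma red (r : nat) (x : int) : (0 < r)%N -> exists k s, x = s + k * r%:Z /\ 1 <= s <= r%:Z.
Proof.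
move=> hr; exists (intdiv.divz (x - 1) r%:Z), (intdiv.modz (x - 1) r%:Z + 1).
have := divz_eq (x - 1) r%:Z. have := intdiv.modz_ge0 (x - 1) (_ : r%:Z != 0). have := intdiv.ltz_pmod (x-1) (_ : 0 < r%:Z).
lia.
Qed.

Lemma uniq_rep (r : nat) (x k k' : int) : (1 <= r)%N -> 1 <= x + k * r%:Z <= r%:Z ->
  1 <= x + k' * r%:Z <= r%:Z -> k = k'.
Proof. move=> hr h1 h2. nia. Qed.

Definition periodic (r : nat) (f : int -> int) := forall x, f (x + r%:Z) = f x + r%:Z.

Lemma per_mul r f : periodic r f -> forall x (k : int), f (x + k * r%:Z) = f x + k * r%:Z.
Proof.
move=> hp.
have pos : forall x (m : nat), f (x + m%:Z * r%:Z) = f x + m%:Z * r%:Z.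
  move=> x; elim=> [|m IH]; first by rewrite mul0r !addr0.
  have -> : x + m.+1%:Z * r%:Z = (x + m%:Z * r%:Z) + r%:Z by lia.
  rewrite hp IH; lia.
move=> x [m|m]; first exact: pos.
have := pos (x + (Negz m) * r%:Z) m.+1.
have -> : x + Negz m * r%:Z + m.+1%:Z * r%:Z = x by rewrite NegzE; lia.
move=> ->. rewrite NegzE; lia.
Qed.

Lemma per_inv r f g : periodic r f -> cancel f g -> cancel g f -> periodic r g.
Proof. move=> hp fK gK y. by rewrite -{1}(gK y) -hp fK. Qed.

Definition sA (r a : nat) (x : int) : bool := ((x - a%:Z) %% r%:Z)%Z == 0.

Lemma sgenE r a x : s_gen r a x = if sA r a (x - 1) then x - 1 else if sA r a x then x + 1 else x.
Proof. rewrite /s_gen /sA. by have -> : x - a%:Z - 1 = x - 1 - a%:Z by ring. Qed.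

Lemma sA_shift r a x y q : (0 < r)%N -> y = x + q * r%:Z -> sA r a y = sA r a x.
Proof.
move=> hr ->; rewrite /sA.
have -> : x + q * r%:Z - a%:Z = q * r%:Z + (x - a%:Z) by ring.
by rewrite modzMDl.
Qed.

Lemma sA_succ r a x : (2 <= r)%N -> sA r a x -> sA r a (x + 1) -> False.
Proof.
move=> hr; rewrite /sA => /eqP /(modE _ (ltnW hr)) [q1 h1] /eqP /(modE _ (ltnW hr)) [q2 h2].
have : q2 - q1 = 0. apply: (@small_mul _ 1 r); lia.
move=> e. have : q2 = q1 by lia. move=> e'. rewrite e' in h2. lia.
Qed.

Lemma sA_self r a : (0 < r)%N -> sA r a a%:Z.
Proof. by move=> hr; rewrite /sA subrr mod0z. Qed.

Lemma sgen_per r a : (0 < r)%N -> periodic r (s_gen r a).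
Proof.
move=> hr x; rewrite !sgenE.
rewrite (@sA_shift r a (x - 1) (x + r%:Z - 1) 1) //; last ring.
rewrite (@sA_shift r a x (x + r%:Z) 1) //; last ring.
case: ifP => _; first ring. case: ifP => _; ring.
Qed.

Lemma sgen_a r a : (2 <= r)%N -> s_gen r a a%:Z = a%:Z + 1.
Proof.
move=> hr; rewrite sgenE sA_self ?(ltnW hr) //.
case: ifP => // h; exfalso; apply: (sA_succ hr h); rewrite subrK sA_self //; lia.
Qed.

Lemma sgen_a1 r a : (2 <= r)%N -> s_gen r a (a%:Z + 1) = a%:Z.
Proof. move=> hr; rewrite sgenE addrK sA_self ?(ltnW hr) //; ring. Qed.

Lemma sgen_inv r a : (2 <= r)%N -> involutive (s_gen r a).
Proof.
move=> hr x; rewrite (sgenE r a x).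
case: ifP => h1.
  rewrite sgenE; case: ifP => h2.
    exfalso; apply: (sA_succ hr h2); by rewrite subrK.
  by rewrite h1 subrK.
case: ifP => h2.
  rewrite sgenE addrK h2; ring.
by rewrite sgenE h1 h2.
Qed.

Lemma sgen1 a x : s_gen 1 a x = x - 1.
Proof. by rewrite sgenE /sA modz1 eqxx. Qed.

Lemma sgen_bij r a : (0 < r)%N -> bijective (s_gen r a).
Proof.
move=> hr. case: (ltngtP r 1) => h.
- lia.
- by apply: inv_bij; apply: sgen_inv.
- subst r. exists (fun x => x + 1) => x; rewrite sgen1; ring.
Qed.

Lemma sgen_lt r a u v : (2 <= r)%N ->
  (s_gen r a v < s_gen r a u) = if sA r a v && (u == v + 1) then false
      else if sA r a u && (v == u + 1) then true else v < u.
Proof.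
move=> hr.
have B x : x - 1 <= s_gen r a x <= x + 1 by rewrite sgenE; case: ifP => _; [|case: ifP => _]; lia.
have P1 x : sA r a x -> s_gen r a x = x + 1.
  move=> h; rewrite sgenE h; case: ifP => // h'; exfalso; apply: (sA_succ hr h'); by rewrite subrK.
have P2 x : sA r a (x - 1) -> s_gen r a x = x - 1 by move=> h; rewrite sgenE h.
have P3 x : ~~ sA r a x -> s_gen r a x <= x.
  by move=> /negbTE h; rewrite sgenE h; case: ifP => _; lia.
have P4 x : ~~ sA r a (x - 1) -> x <= s_gen r a x.
  by move=> /negbTE h; rewrite sgenE h; case: ifP => _; lia.
have S x : sA r a x -> ~~ sA r a (x + 1) by move=> h; apply/negP => h'; exact: (sA_succ hr h h').
case: (ltgtP u v) => huv.
- have -> : (u == v + 1) = false by lia.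
  rewrite andbF /=.
  case: (eqVneq v (u + 1)) => [e|ne].
    subst v. rewrite andbT. case h: (sA r a u).
      rewrite (P1 u) // (P2 (u + 1)) ?addrK //; lia.
    have := P3 _ (negbT h). have := P4 (u + 1); rewrite addrK (negbT h) => /(_ isT). lia.
  rewrite andbF. have := B u; have := B v. lia.
- have -> : (v == u + 1) = false by lia.
  rewrite andbF /=.
  case: (eqVneq u (v + 1)) => [e|ne].
    subst u. rewrite andbT. case h: (sA r a v) => /=.
      rewrite (P1 v) // (P2 (v + 1)) ?addrK //; lia.
    have := P3 _ (negbT h). have := P4 (v + 1); rewrite addrK (negbT h) => /(_ isT). lia.
  rewrite andbF /=.
  case: (eqVneq u (v + 2)) => [e|ne2]; last by have := B u; have := B v; lia.
  subst u. case h: (sA r a v).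
    have := S _ h => h'. have := P4 (v + 2). have -> : v + 2 - 1 = v + 1 by ring.
    move=> /(_ h'). have := B v. lia.
  have := P3 _ (negbT h). have := B (v + 2). lia.
- subst u. have -> : (v == v + 1) = false by lia. by rewrite !andbF ltxx.
Qed.

Lemma sgen_conj r a c y : (0 < r)%N ->
  s_gen r a (y + c) = s_gen r `|((a%:Z - c - 1) %% r%:Z)%Z|%N.+1 y + c.
Proof.
move=> hr.
set a' := `|_|%N.+1.
have ha' : a'%:Z = ((a%:Z - c - 1) %% r%:Z)%Z + 1.
  rewrite /a' -addn1 PoszD gez0_abs //; apply: modz_ge0; lia.
set q := ((a%:Z - c - 1) %/ r%:Z)%Z.
have hq := divz_eq (a%:Z - c - 1) r%:Z.
have E x : sA r a' x = sA r a (x + c).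
  rewrite /sA. 
  have hm : ((a%:Z - c - 1) %% r%:Z)%Z = (a%:Z - c - 1) - q * r%:Z by rewrite {2}hq /q; ring.
  have -> : x - a'%:Z = q * r%:Z + (x + c - a%:Z) by rewrite ha' hm; ring.
  by rewrite modzMDl.
rewrite !sgenE E (E y).
have -> : y + c - 1 = y - 1 + c by ring.
case: ifP => _; first ring. case: ifP => _; ring.
Qed.

Definition box (r B : nat) : seq (int * int) :=
  [seq (s%:Z, s%:Z + j%:Z) | s <- iota 1 r, j <- iota 1 B].
Definition invb (r : nat) (f : int -> int) (p : int * int) : bool :=
  (1 <= p.1 <= r%:Z) && (p.1 < p.2) && (f p.2 < f p.1).
Definition invl r (f : int -> int) B := [seq p <- box r B | f p.2 < f p.1].
Definition Mb r (f : int -> int) := (\max_(s < r) `|f (s.+1)%:Z - (s.+1)%:Z|%N)%N.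
Definition inv r f := size (invl r f (2 * Mb r f)).

Lemma mem_box r B p : (p \in box r B) = (1 <= p.1 <= r%:Z) && (p.1 < p.2 <= p.1 + B%:Z).
Proof.
apply/allpairsP/idP.
- case=> [[s j]] /= [hs hj ->] /=. rewrite mem_iota in hs. rewrite mem_iota in hj. lia.
- case: p => x y /= h. exists (`|x|%N, `|y - x|%N) => /=; split.
  + rewrite mem_iota; lia.
  + rewrite mem_iota; lia.
  + congr pair; lia.
Qed.

Lemma uniq_box r B : uniq (box r B).
Proof.
apply: allpairs_uniq; try exact: iota_uniq.
move=> [s j] [s' j'] _ _ /= [e1 e2]. congr pair; lia.
Qed.

Lemma Mb_bound r f : (0 < r)%N -> periodic r f -> forall x, (`|f x - x|%N <= Mb r f)%N.
Proof.
move=> hr hp x. have [k [s [-> hs]]] := red x hr.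
rewrite per_mul //. have -> : f s + k * r%:Z - (s + k * r%:Z) = f s - s by ring.
have hs' : (`|s|%N.-1 < r)%N by lia.
have := @leq_bigmax _ (fun i : 'I_r => `|f (i.+1)%:Z - (i.+1)%:Z|%N) (Ordinal hs').
rewrite /Mb /=. have -> : (`|s|%N.-1).+1%:Z = s by lia. done.
Qed.

Lemma invb_bound r f p : (0 < r)%N -> periodic r f -> invb r f p -> p.2 <= p.1 + (2 * Mb r f)%:Z.
Proof.
move=> hr hp; rewrite /invb => /andP [/andP [_ h1] h2].
have := Mb_bound hr hp p.1; have := Mb_bound hr hp p.2. lia.
Qed.

Lemma mem_invl r f B p : (0 < r)%N -> periodic r f -> (2 * Mb r f <= B)%N ->
  (p \in invl r f B) = invb r f p.
Proof.
move=> hr hp hB. rewrite mem_filter mem_box /invb.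
case h: (f p.2 < f p.1); last by rewrite !andbF.
rewrite ?andbT. case h1: (1 <= p.1 <= r%:Z) => //=.
case h2: (p.1 < p.2) => //=.
have : invb r f p by rewrite /invb h h1 h2.
move=> /(invb_bound hr hp). lia.
Qed.

Lemma uniq_invl r f B : uniq (invl r f B).
Proof. exact/filter_uniq/uniq_box. Qed.

Lemma inv_B r f B : (0 < r)%N -> periodic r f -> (2 * Mb r f <= B)%N -> size (invl r f B) = inv r f.
Proof.
move=> hr hp hB. apply: perm_size. apply: uniq_perm; try exact: uniq_invl.
move=> p. by rewrite !mem_invl.
Qed.

Lemma has_card_inv r f : (0 < r)%N -> periodic r f -> has_card (fun p => invb r f p) (inv r f).
Proof.
move=> hr hp. exists (invl r f (2 * Mb r f)); split; first exact: uniq_invl.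
split => //. move=> p. by rewrite mem_invl.
Qed.

Lemma inv_sub r f g : (0 < r)%N -> periodic r f -> periodic r g ->
  (forall p, invb r f p -> invb r g p) -> (inv r f <= inv r g)%N.
Proof.
move=> hr hf hg H. set B := (2 * Mb r f + 2 * Mb r g)%N.
rewrite -(@inv_B r f B) // ?leq_addr // -(@inv_B r g B) // ?leq_addl //.
apply: uniq_leq_size; first exact: uniq_invl.
move=> p. rewrite !mem_invl ?leq_addr ?leq_addl //. exact: H.
Qed.

Lemma inv_ext r f g : (0 < r)%N -> periodic r f -> periodic r g ->
  (forall x y, (f x < f y) = (g x < g y)) -> inv r f = inv r g.
Proof.
move=> hr hf hg H. apply/eqP; rewrite eqn_leq; apply/andP; split; apply: inv_sub => // p;
  by rewrite /invb H.
Qed.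

Lemma inv0 r f : (0 < r)%N -> periodic r f -> (forall x y, x < y -> f x < f y) -> inv r f = 0%N.
Proof.
move=> hr hp H. rewrite /inv /invl.
rewrite (@eq_in_filter _ _ pred0); first by rewrite filter_pred0.
move=> p; rewrite mem_box => /andP [_ /andP [h _]] /=.
by apply/negbTE; rewrite -leNgt; apply/ltW/H.
Qed.

Lemma inv0_incr r f : (0 < r)%N -> periodic r f -> injective f -> inv r f = 0%N ->
  forall x y, x < y -> f x < f y.
Proof.
move=> hr hp hi h0 x y hxy.
have [k [s [ex hs]]] := red x hr.
set t := y - k * r%:Z.
have ey : y = t + k * r%:Z by rewrite /t; ring.
rewrite ex ey !per_mul // ltrD2r.
have hst : s < t by lia.
case: (ltgtP (f s) (f t)) => // h.
- have : invb r f (s, t) by rewrite /invb /= hs hst h.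
  rewrite -(@mem_invl r f (2 * Mb r f)) // => hm.
  by move: h0; rewrite /inv; case: (invl _ _ _) hm.
- move/hi: h => e. lia.
Qed.

Lemma per_comp r f g : periodic r f -> periodic r g -> periodic r (f \o g).
Proof. by move=> hf hg x /=; rewrite hg hf. Qed.

Lemma inv_step r (a : nat) w g : (2 <= r)%N -> periodic r w -> cancel w g -> cancel g w ->
  g a%:Z < g (a%:Z + 1) -> inv r (s_gen r a \o w) = (inv r w).+1.
Proof.
move=> hr hp wK gK hlt.
have hr0 : (0 < r)%N by lia.
have hg := per_inv hp wK gK.
have hf : periodic r (s_gen r a \o w) := per_comp (sgen_per a hr0) hp.
set f := s_gen r a \o w in hf *.
set B := (2 * Mb r w + 2 * Mb r f)%N.
set p := g a%:Z. set q := g (a%:Z + 1).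
have [k [s0 [ep hs0]]] := red p hr0.
set t0 := s0 + (q - p).
have ws0 : w s0 = a%:Z - k * r%:Z.
  have -> : s0 = p + (- k) * r%:Z by rewrite ep; ring.
  by rewrite per_mul // gK; ring.
have wt0 : w t0 = a%:Z + 1 - k * r%:Z.
  have -> : t0 = q + (- k) * r%:Z by rewrite /t0 ep; ring.
  by rewrite per_mul // gK; ring.
have pre x (k' : int) : w x = a%:Z + k' * r%:Z -> x = p + k' * r%:Z.
  move=> e. by rewrite -(wK x) e per_mul.
have pre1 x (k' : int) : w x = a%:Z + 1 + k' * r%:Z -> x = q + k' * r%:Z.
  move=> e. by rewrite -(wK x) e per_mul.
have sAw x : sA r a (w x) -> exists k', w x = a%:Z + k' * r%:Z.
  rewrite /sA => /eqP /(modE _ hr0) [k' e]. exists k'. lia.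
have key : forall x, invb r f x = (x == (s0, t0)) || invb r w x.
  move=> [s t]. rewrite /invb /f /= sgen_lt //.
  case: ifP => [/andP [h1 /eqP h2]|h1].
    rewrite andbF. case: (boolP ((1 <= s <= r%:Z) && (s < t))) => [/andP [hs1 hst]|hn].
      exfalso. have [k' e] := sAw _ h1. have := pre _ _ e.
      rewrite e in h2. have := pre1 s k'. rewrite h2 => /(_ (ltac:(ring))). lia.
    apply/esym/negbTE; rewrite negb_or; apply/andP; split.
      apply/eqP => -[es et]. move: hn; rewrite es et hs0 /t0. lia.
    by [].  
  case: ifP => [/andP [h3 /eqP h4]|h3].
    have [k' e] := sAw _ h3.
    have es := pre _ _ e. have et : t = q + k' * r%:Z by apply: pre1; rewrite h4 e; ring.
    have -> : (w t < w s) = false by lia.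
    rewrite !andbF orbF andbT.
    apply/idP/idP.
      move=> /andP [hs hst]. have hkk : k' = - k.
        apply: (@uniq_rep r p); try lia.
      apply/eqP; congr pair; rewrite /t0; lia.
    move=> /eqP [-> ->]. rewrite hs0 /t0 /=. lia.
  case: (eqVneq (s, t) (s0, t0)) => [e|ne] //=.
  case: e => es et. exfalso. move: h3. rewrite es et ws0 wt0.
  have -> : a%:Z + 1 - k * r%:Z == a%:Z - k * r%:Z + 1 by apply/eqP; ring.
  rewrite andbT /sA. have -> : a%:Z - k * r%:Z - a%:Z = (- k) * r%:Z by ring.
  by rewrite -(addr0 (- k * r%:Z)) modzMDl mod0z.
have nin : (s0, t0) \notin invl r w B.
  rewrite mem_invl // ?leq_addr // /invb /= ws0 wt0. lia.
rewrite -(@inv_B r f B) // ?leq_addl // -(@inv_B r w B) // ?leq_addr //.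
have : perm_eq (invl r f B) ((s0, t0) :: invl r w B).
  apply: uniq_perm; first exact: uniq_invl.
    by rewrite /= nin uniq_invl.
  move=> x. rewrite in_cons !mem_invl ?leq_addr ?leq_addl //.
by move/perm_size.
Qed.

Lemma inv_step_down r (a : nat) w g : (2 <= r)%N -> periodic r w -> cancel w g -> cancel g w ->
  g (a%:Z + 1) < g a%:Z -> (inv r (s_gen r a \o w)).+1 = inv r w.
Proof.
move=> hr hp wK gK hlt.
have hr0 : (0 < r)%N by lia.
have hI := sgen_inv a hr.
have hp' : periodic r (s_gen r a \o w) := per_comp (sgen_per a hr0) hp.
have := @inv_step r a (s_gen r a \o w) (g \o s_gen r a) hr hp'.
have -> : s_gen r a \o (s_gen r a \o w) = w by apply: functional_extensionality => x /=; rewrite hI.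
move=> -> //.
- by move=> x /=; rewrite hI wK.
- by move=> y /=; rewrite gK hI.
- by rewrite /= sgen_a // sgen_a1.
Qed.

Lemma inv_sgen_le r (a : nat) w : (0 < r)%N -> periodic r w -> bijective w ->
  (inv r (s_gen r a \o w) <= (inv r w).+1)%N.
Proof.
move=> hr hp [g wK gK].
have hp' : periodic r (s_gen r a \o w) := per_comp (sgen_per a hr) hp.
case: (ltngtP r 1) => h1; first lia.
- case: (ltgtP (g a%:Z) (g (a%:Z + 1))) => h.
  + by rewrite (inv_step h1 hp wK gK h).
  + by rewrite -(inv_step_down h1 hp wK gK h); lia.
  + have := congr1 w h; rewrite !gK. lia.
- subst r. rewrite (@inv_ext 1 _ w) //. move=> x y /=; rewrite !sgen1; lia.
Qed.

Lemma word_per r js : (0 < r)%N -> periodic r (word r js) /\ bijective (word r js).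
Proof.
move=> hr; elim: js => [|j js [IH1 IH2]] /=.
  split; [by [] | by exists id].
  split; first exact: per_comp (sgen_per j hr) IH1.
  exact: bij_comp (sgen_bij j hr) IH2.
Qed.

Lemma inv_word r js : (0 < r)%N -> (inv r (word r js) <= size js)%N.
Proof.
move=> hr; elim: js => [|j js IH] /=.
  by rewrite (@inv0 r id) //.
have [hp hb] := word_per js hr.
apply: leq_trans (inv_sgen_le j hr hp hb) _. by rewrite ltnS.
Qed.

Lemma word_lower r w k : (0 < r)%N -> has_word_of_length r w k -> (inv r w <= k)%N.
Proof.
move=> hr [c [js [<- [_ hw]]]].
have [hp _] := word_per js hr.
have -> : w = (fun x => word r js x + c) by apply: functional_extensionality.
rewrite (@inv_ext r _ (word r js)) //; first exact: inv_word.
- by move=> x /=; rewrite hp; ring.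
- by move=> x y; rewrite ltrD2r.
Qed.

Lemma incr_succ (f : int -> int) : (forall x, f x < f (x + 1)) -> forall x y, x < y -> f x < f y.
Proof.
move=> H x y hxy.
have -> : y = x + (`|(y - x - 1)%R|%N.+1)%:Z by lia.
elim: (`|(y - x - 1)%R|%N) => [|m IH]; first by rewrite (H x).
apply: lt_trans IH _. have -> : x + m.+2%:Z = (x + m.+1%:Z) + 1 by lia. exact: H.
Qed.

Lemma incr_shift r w : (0 < r)%N -> periodic r w -> bijective w ->
  (forall x y, x < y -> w x < w y) -> forall x, w x = x + w 0.
Proof.
move=> hr hp [g wK gK] H.
have step x : w (x + 1) = w x + 1.
  set y := g (w x + 1).
  have wy : w y = w x + 1 by rewrite /y gK.
  have hxy : x < y. case: (ltP x y) => // h.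
    have : w y <= w x. case: (eqVneq y x) => [->|ne]; first by [].
      apply: ltW; apply: H; rewrite lt_neqAle ne h. done.
    lia.
  case: (eqVneq y (x + 1)) => [<-|ne]; first by [].
  have h1 : x + 1 < y by lia.
  have := H _ _ h1. have := H x (x + 1) ltac:(lia). lia.
have hp1 : periodic 1 w by move=> x; exact: step.
move=> x. have := per_mul hp1 0 x. rewrite add0r mulr1 => ->. ring.
Qed.

Lemma descent r w g : (0 < r)%N -> periodic r w -> cancel w g -> cancel g w -> inv r w <> 0%N ->
  exists a : nat, (1 <= a <= r)%N /\ g (a%:Z + 1) < g a%:Z.
Proof.
move=> hr hp wK gK hinv.
have hg := per_inv hp wK gK.
case h: (has (fun a : nat => g (a%:Z + 1) < g a%:Z) (iota 1 r)).
  move/hasP: h => [a ha hlt]. exists a; split => //. rewrite mem_iota in ha. lia.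
exfalso; apply: hinv. apply: inv0 => //.
have hs : forall x, g x < g (x + 1).
  move=> x. have [k [s [-> hs]]] := red x hr.
  have -> : s + k * r%:Z + 1 = (s + 1) + k * r%:Z by ring.
  rewrite !per_mul // ltrD2r.
  move/hasPn: h => /(_ `|s|%N). rewrite mem_iota. have -> : `|s|%N%:Z = s by lia.
  move=> /(_ ltac:(lia)). rewrite -leNgt le_eqVlt => /orP [/eqP e|//].
  have := congr1 w e. rewrite !gK. lia.
move=> x y hxy. have gi := incr_succ hs.
case: (ltgtP (w x) (w y)) => // h'.
  have := gi _ _ h'. rewrite !wK. lia.
have := congr1 g h'. rewrite !wK. lia.
Qed.

Lemma word_upper r : (0 < r)%N -> forall k w, affine_perm r w -> inv r w = k -> has_word_of_length r w k.
Proof.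
move=> hr; elim=> [|k IH] w [[g wK gK] hp] hk.
  have hinc := inv0_incr hr hp (can_inj wK) hk.
  have hw := incr_shift hr hp (Bijective wK gK) hinc.
  exists (w 0), [::]; split => //.
have [a [ha hlt]] := descent hr hp wK gK (ltac:(lia)).
have hr2 : (2 <= r)%N.
  case: (ltngtP r 1) => h1; [lia|by []|subst r].
  have hg := per_inv hp wK gK. have e : g (a%:Z + 1) = g a%:Z + 1 by exact: hg a%:Z. exfalso; lia.
have hI := sgen_inv a hr2.
have hp' : periodic r (s_gen r a \o w) := per_comp (sgen_per a hr) hp.
have hb' : bijective (s_gen r a \o w) := bij_comp (sgen_bij a hr) (Bijective wK gK).
have := inv_step_down hr2 hp wK gK hlt. rewrite hk => [[hk']].
have [c [js [hs [hall hw]]]] := IH _ (conj hb' hp') hk'.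
exists c, (`|((a%:Z - c - 1) %% r%:Z)%Z|%N.+1 :: js); split; first by rewrite /= hs.
split.
  rewrite /= hall andbT. idtac.
  have := intdiv.ltz_pmod (a%:Z - c - 1) (_ : 0 < r%:Z). have := intdiv.modz_ge0 (a%:Z - c - 1) (_ : r%:Z != 0).
  lia.
move=> x. have := hw x => /= e.
rewrite -(sgen_conj _ _ _ hr) -e hI //.
Qed.

Lemma ell_inv r w : (0 < r)%N -> affine_perm r w -> ell r w = inv r w.
Proof.
move=> hr hw. rewrite /ell.
set P := fun k => _.
have hP : P (inv r w).
  split; first exact: word_upper.
  move=> k'; exact: word_lower.
have := @epsilon_spec _ (inhabits 0%N) P (ex_intro _ _ hP).
set e := epsilon _ _. move=> [h1 h2].
apply/eqP; rewrite eqn_leq; apply/andP; split; first exact: h2 (proj1 hP).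
exact: word_lower.
Qed.

Definition P (lam : int -> nat) (i : nat) := (\sum_(1 <= t < i) lam t%:Z)%N.

Lemma P1 lam : P lam 1 = 0%N.
Proof. by rewrite /P big_geq. Qed.

Lemma P_succ lam i : (1 <= i)%N -> P lam i.+1 = (P lam i + lam i%:Z)%N.
Proof. move=> h; by rewrite /P big_nat_recr. Qed.

Lemma P_step lam j : (P lam j <= P lam j.+1)%N.
Proof.
case: j => [|j]; first by rewrite /P !big_geq.
by rewrite (@P_succ lam j.+1) // leq_addr.
Qed.

Lemma P_mono lam i j : (i <= j)%N -> (P lam i <= P lam j)%N.
Proof.
move=> hij. rewrite -(subnK hij). elim: (j - i)%N => [|m IH] //=.
rewrite addSn. exact: leq_trans IH (P_step _ _).
Qed.

Lemma divmod_uniq (k j : int) (n : nat) : (0 < n)%N -> 0 <= j < n%:Z ->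
  ((k * n%:Z + j) %/ n%:Z)%Z = k /\ ((k * n%:Z + j) %% n%:Z)%Z = j.
Proof.
move=> hn hj. split.
- rewrite divzMDl; last by lia. rewrite divz_small; first by rewrite addr0.
  by rewrite gez0_abs //; lia.
- by rewrite modzMDl modz_small.
Qed.

Section Blocks.
Variables (n r : nat) (lam : int -> nat).
Hypothesis hn : (1 <= n)%N.
Hypothesis hr : (1 <= r)%N.
Hypothesis hL : in_Lambda n r lam.

Lemma Pnr : P lam n.+1 = r.
Proof. by case: hL. Qed.

Lemma P_le_r i : (i <= n.+1)%N -> (P lam i <= r)%N.
Proof. move=> h; rewrite -Pnr; exact: P_mono. Qed.

Lemma lam_mul x (k : int) : lam (x + k * n%:Z) = lam x.
Proof.
have hp : forall x, lam (x + n%:Z) = lam x by case: hL.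
have pos : forall x (m : nat), lam (x + m%:Z * n%:Z) = lam x.
  move=> y; elim=> [|m IH]; first by rewrite mul0r addr0.
  have -> : y + m.+1%:Z * n%:Z = (y + m%:Z * n%:Z) + n%:Z by lia.
  by rewrite hp IH.
case: k => m; first exact: pos.
rewrite -(pos (x + Negz m * n%:Z) m.+1).
congr lam. rewrite NegzE; lia.
Qed.

Lemma inR_shift m s (j : int) : inR n r lam m s -> inR n r lam (m + j * n%:Z) (s + j * r%:Z).
Proof.
case=> k [i [hi [hm hs]]]. exists (k + j), i; split => //; split; first by rewrite hm; ring.
move: hs. lia.
Qed.

Lemma ivt (s : int) N : 0 < s -> s <= (P lam N.+1)%:Z ->
  exists i, (1 <= i <= N)%N /\ (P lam i)%:Z < s <= (P lam i)%:Z + (lam i%:Z)%:Z.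
Proof.
move=> h0; elim: N => [|N IH] h.
  rewrite P1 in h. lia.
case: (leP s (P lam N.+1)%:Z) => h'.
  have [i [hi hs]] := IH h'. exists i; split => //; lia.
exists N.+1; split; first lia.
rewrite P_succ // in h. lia.
Qed.

Lemma inR_exists x : exists m, inR n r lam m x.
Proof.
have [k [s [ex hs]]] := red x hr.
have [i [hi hsi]] := @ivt s n ltac:(lia) ltac:(rewrite Pnr; lia).
exists (i%:Z + k * n%:Z), k, i; split => //; split => //.
rewrite ex. change (P lam i)%:Z with ((\sum_(1 <= t < i) lam t%:Z)%N)%:Z in hsi. lia.
Qed.

Lemma inR_bounds m s : inR n r lam m s -> exists k i,
  [/\ (1 <= i <= n)%N, m = i%:Z + k * n%:Z,
      k * r%:Z + (P lam i)%:Z < s & s <= k * r%:Z + (P lam i.+1)%:Z].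
Proof.
case=> k [i [hi [hm hs]]]. exists k, i.
have e : P lam i.+1 = (P lam i + lam i%:Z)%N by apply: P_succ; lia.
rewrite e. case: hs => h1 h2. split => //. rewrite PoszD addrA. exact: h2.
Qed.

Lemma inR_mono m m' x y : inR n r lam m x -> inR n r lam m' y -> x <= y -> m <= m'.
Proof.
move=> /inR_bounds [k [i [hi hm h1 h2]]] /inR_bounds [k' [i' [hi' hm' h1' h2']]] hxy.
have Pi := P_le_r (_ : (i <= n.+1)%N). have Pi' := P_le_r (_ : (i'.+1 <= n.+1)%N).
have Pii : (i' < i)%N -> (P lam i'.+1 <= P lam i)%N by move=> h; apply: P_mono.
case: (ltP m' m) => // hlt. exfalso.
case: (ltgtP k k') => hk.
- have : k * n%:Z + n%:Z <= k' * n%:Z by nia. lia.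
- have : k' * r%:Z + r%:Z <= k * r%:Z by nia.
  have := Pi' ltac:(lia). have := Pi ltac:(lia). lia.
- subst k'. have hii : (i' < i)%N by lia. have := Pii hii. lia.
Qed.

Lemma inR_small m s : inR n r lam m s -> 1 <= s <= r%:Z -> 1 <= m <= n%:Z.
Proof.
move=> /inR_bounds [k [i [hi hm h1 h2]]] hs.
have Pi := P_le_r (_ : (i <= n.+1)%N). have Pi' := P_le_r (_ : (i.+1 <= n.+1)%N).
have := Pi ltac:(lia). have := Pi' ltac:(lia). move=> a b.
have hk : k = 0.
  case: (ltgtP k 0) => // hk.
  - have : k * r%:Z <= - r%:Z by nia. lia.
  - have : r%:Z <= k * r%:Z by nia. lia.
subst k. lia.
Qed.

Lemma inR_block (i : nat) s : (1 <= i <= n)%N -> inR n r lam i%:Z s ->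
  (P lam i)%:Z < s <= (P lam i.+1)%:Z.
Proof.
move=> hi /inR_bounds [k [i' [hi' hm h1 h2]]].
have hk : k = 0.
  case: (ltgtP k 0) => // hk.
  - have : k * n%:Z <= - n%:Z by nia. lia.
  - have : n%:Z <= k * n%:Z by nia. lia.
subst k. have e : i' = i by lia. subst i'. lia.
Qed.

End Blocks.

Section Phi.
Variables (n r : nat) (lam : int -> nat) (phi : int -> int).
Hypothesis hn : (1 <= n)%N.
Hypothesis hr : (1 <= r)%N.
Hypothesis hL : in_Lambda n r lam.
Hypothesis hphi : is_ilambda n r lam phi.

Lemma phi_inR x : inR n r lam (phi x) x.
Proof. have [m hm] := inR_exists hn hr hL x. by rewrite (hphi hm). Qed.

Lemma phi_mono x y : x <= y -> phi x <= phi y.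
Proof. move=> h. exact: (inR_mono hn hr hL (phi_inR x) (phi_inR y) h). Qed.

Lemma phi_shift x (j : int) : phi (x + j * r%:Z) = phi x + j * n%:Z.
Proof. exact: hphi (inR_shift hn hr j (phi_inR x)). Qed.

Lemma phi_small s : 1 <= s <= r%:Z -> 1 <= phi s <= n%:Z.
Proof. move=> hs. have := inR_small hn hr hL (phi_inR s) hs. done. Qed.

Lemma Young_phi w : in_Young n r lam w -> forall x, phi (w x) = phi x.
Proof.
move=> [[[g wK gK] hp] hY] x.
have [k [i [hi hm _ _]]] := inR_bounds hn hr (phi_inR x).
have h1 : inR n r lam i%:Z (x + (- k) * r%:Z).
  have := inR_shift hn hr (- k) (phi_inR x). rewrite hm. have -> : i%:Z + k * n%:Z + - k * n%:Z = i%:Z by ring. done.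
have := hY _ _ hi h1. rewrite per_mul // => /(inR_shift hn hr k).
have -> : w x + - k * r%:Z + k * r%:Z = w x by ring.
rewrite -hm. exact: hphi.
Qed.

Lemma Young_sgen (a : nat) : (1 <= a)%N -> (a < r)%N -> phi a%:Z = phi (a%:Z + 1) ->
  in_Young n r lam (s_gen r a).
Proof.
move=> ha1 har he. have hr2 : (2 <= r)%N by lia.
split; first split; [exact: sgen_bij | exact: sgen_per |].
move=> i s hi hin.
have hb := inR_block hn hr hi hin.
have Pi := P_le_r hL (_ : (i.+1 <= n.+1)%N).
have hs : 1 <= s <= r%:Z by have := Pi ltac:(lia); lia.
have hphs : phi s = i%:Z := hphi hin.
rewrite sgenE. case: ifP => h1.
  move: h1; rewrite /sA => /eqP /(modE _ hr) [q e].
  have q0 : q = 0 by apply: (small_mul e); lia.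
  subst q. have es : s = a%:Z + 1 by lia.
  have := phi_inR a%:Z. by rewrite he -es hphs; have -> : s - 1 = a%:Z by lia.
case: ifP => h2 //.
move: h2; rewrite /sA => /eqP /(modE _ hr) [q e].
have q0 : q = 0 by apply: (small_mul e); lia.
subst q. have es : s = a%:Z by lia.
have := phi_inR (a%:Z + 1). by rewrite -he -es hphs.
Qed.

Definition km (m : int) : int := ((m - 1) %/ n%:Z)%Z.
Definition im (m : int) : nat := `|((m - 1) %% n%:Z)%Z|%N.+1.
Definition lo m : int := km m * r%:Z + (P lam (im m))%:Z.
Definition hi m : int := lo m + (lam (im m)%:Z)%:Z.

Lemma im_bnd m : (1 <= im m <= n)%N.
Proof.
rewrite /im. have := intdiv.ltz_pmod (m - 1) (_ : 0 < n%:Z). have := intdiv.modz_ge0 (m - 1) (_ : n%:Z != 0).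
lia.
Qed.

Lemma m_dec m : m = (im m)%:Z + km m * n%:Z.
Proof.
rewrite /im /km. have := divz_eq (m - 1) n%:Z. have := intdiv.modz_ge0 (m - 1) (_ : n%:Z != 0). lia.
Qed.

Lemma inR_lohi m x : inR n r lam m x <-> lo m < x <= hi m.
Proof.
split.
- move=> h. have [k [i [hi1 hm h1 h2]]] := inR_bounds hn hr h.
  have [e1 e2] : km m = k /\ `|((m - 1) %% n%:Z)%Z|%N = i.-1.
    have [d1 d2] := @divmod_uniq k (i.-1)%:Z n hn ltac:(lia).
    rewrite /km. have -> : m - 1 = k * n%:Z + (i.-1)%:Z by lia.
    split => //. rewrite d2. lia.
  have ei : im m = i by rewrite /im e2; lia.
  rewrite /hi /lo e1 ei. rewrite P_succ in h2; last lia. lia.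
- move=> h. exists (km m), (im m). split; first exact: im_bnd.
  split; first exact: m_dec.
  move: h; rewrite /hi /lo. change (P lam (im m))%:Z with ((\sum_(1 <= t < im m) lam t%:Z)%N)%:Z. lia.
Qed.

Lemma lo_shift m : lo (m + n%:Z) = lo m + r%:Z /\ im (m + n%:Z) = im m.
Proof.
have [d1 d2] := @divmod_uniq (km m + 1) ((m - 1) %% n%:Z)%Z n hn
   ltac:(have := intdiv.ltz_pmod (m - 1) (_ : 0 < n%:Z); have := intdiv.modz_ge0 (m - 1) (_ : n%:Z != 0); lia).
have e : m + n%:Z - 1 = (km m + 1) * n%:Z + ((m - 1) %% n%:Z)%Z.
  rewrite /km. have := divz_eq (m - 1) n%:Z. lia.
have ek : km (m + n%:Z) = km m + 1 by rewrite /km e d1.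
have ei : im (m + n%:Z) = im m by rewrite /im e d2.
split => //. rewrite /lo ek ei. ring.
Qed.

Definition wl (x : int) : int := lo (phi x) + hi (phi x) + 1 - x.

Lemma wl_in x : inR n r lam (phi x) (wl x).
Proof.
have /inR_lohi h := phi_inR x. apply/inR_lohi. rewrite /wl. move: h. rewrite /hi. lia.
Qed.

Lemma wl_phi x : phi (wl x) = phi x.
Proof. exact: hphi (wl_in x). Qed.

Lemma wl_inv : involutive wl.
Proof. move=> x. rewrite {1}/wl wl_phi /wl. ring. Qed.

Lemma wl_per : periodic r wl.
Proof.
move=> x. rewrite /wl.
have := phi_shift x 1. rewrite !mul1r => ->.
have [e1 e2] := lo_shift (phi x). rewrite /hi e1 e2. ring.
Qed.

Lemma wl_Young : in_Young n r lam wl.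
Proof.
split; first split; [exact: inv_bij wl_inv | exact: wl_per |].
move=> i s hi hin. have e := hphi hin. rewrite -e. exact: wl_in.
Qed.

Lemma wl_rev x y : x < y -> phi x = phi y -> wl y < wl x.
Proof. move=> h e. rewrite /wl e. lia. Qed.

End Phi.

Lemma affine_comp r f h : affine_perm r f -> affine_perm r h -> affine_perm r (f \o h).
Proof. move=> [bf pf] [bh ph]; split; [exact: bij_comp | exact: per_comp]. Qed.

Theorem corollary3p2p4 (n r : nat) (lam : int -> nat) (d ilam : int -> int) :
  (1 <= n)%N -> (1 <= r)%N ->
  in_Lambda n r lam -> in_D n r lam d -> is_ilambda n r lam ilam ->
  let i := fun k => ilam (d k) in
  (exists dp, coset_max n r lam d dp) /\
  forall dp, coset_max n r lam d dp -> has_card (Inv r i) (ell r dp).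
Proof.
move=> hn hr hL hD hphi i.
have [hda hDl] := hD.
have [[g dK gK] hdp] := hda.
have hg := per_inv hdp dK gK.
have Hsh := phi_shift hn hr hL hphi.
have Hmono := phi_mono hn hr hL hphi.
have adj : forall x, ilam x = ilam (x + 1) -> g x < g (x + 1).
  move=> x e. have [k [s [ex hs]]] := red x hr.
  have es : ilam s = ilam (s + 1).
    move: e. rewrite ex Hsh. have -> : s + k * r%:Z + 1 = (s + 1) + k * r%:Z by ring.
    rewrite Hsh. move=> h. by have := addIr _ h.
  have sr : s < r%:Z.
    rewrite lt_neqAle; apply/andP; split; last by case/andP: hs.
    apply/eqP => sr. rewrite sr in es.
    have e1 : ilam r%:Z = ilam 1 + n%:Z.
      rewrite es. have := Hsh 1 1. rewrite !mul1r addrC. done.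
    have a : (1 <= ilam 1 <= n%:Z) := @phi_small n r lam ilam hn hr hL hphi 1 ltac:(lia).
    have b : (1 <= ilam r%:Z <= n%:Z) := @phi_small n r lam ilam hn hr hL hphi r%:Z ltac:(lia).
    lia.
  rewrite ex. have -> : s + k * r%:Z + 1 = (s + 1) + k * r%:Z by ring.
  rewrite !per_mul // ltrD2r.
  have ha : s = (`|s|%N)%:Z by lia.
  set a := `|s|%N in ha. rewrite ha in es *.
  have hr2 : (2 <= r)%N by lia.
  case: (ltgtP (g a%:Z) (g (a%:Z + 1))) => // h.
    exfalso.
    have Y := Young_sgen hn hr hL hphi (a := a) ltac:(lia) ltac:(lia) es.
    have := hDl _ Y.
    have [Yb Yp] := Y.
    rewrite (ell_inv hr (affine_comp Yb hda)) (ell_inv hr hda).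
    have := inv_step_down hr2 hdp dK gK h. lia.
  have := congr1 d h. rewrite !gK. lia.
have Dinc : forall x y, x < y -> ilam x = ilam y -> g x < g y.
  move=> x y hxy e.
  have -> : y = x + (`|(y - x - 1)%R|%N.+1)%:Z by lia.
  have : ilam x = ilam (x + (`|(y - x - 1)%R|%N.+1)%:Z).
    by have -> : x + (`|(y - x - 1)%R|%N.+1)%:Z = y by lia.
  elim: (`|(y - x - 1)%R|%N) => [|m IH] e'.
    apply: adj. by rewrite e'.
  have hm1 : ilam x = ilam (x + m.+1%:Z).
    have := Hmono x (x + m.+1%:Z) ltac:(lia). have := Hmono (x + m.+1%:Z) (x + m.+2%:Z) ltac:(lia).
    lia.
  apply: lt_trans (IH hm1) _.
  have -> : x + m.+2%:Z = (x + m.+1%:Z) + 1 by lia.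
  apply: adj. have -> : x + m.+1%:Z + 1 = x + m.+2%:Z by lia. lia.
set wL := wl n r lam ilam.
have YL : in_Young n r lam wL := wl_Young hn hr hL hphi.
have [[YLb YLp] _] := YL.
set f0 := wL \o d.
have af0 : affine_perm r f0 := affine_comp (conj YLb YLp) hda.
have pf0 : periodic r f0 := proj2 af0.
have key1 : forall s t, s < t -> (ilam (d t) <= ilam (d s)) = (f0 t < f0 s).
  move=> s t hst. rewrite /f0 /=.
  have wphi := wl_phi hn hr hL hphi.
  apply/idP/idP.
  - rewrite le_eqVlt => /orP [/eqP e|h].
      case: (ltgtP (d s) (d t)) => h'.
      + rewrite /wL /wl e. lia.
      + have := Dinc _ _ h' e. rewrite !dK. lia.
      + have := congr1 g h'. rewrite !dK. lia.
    case: (ltP (wL (d t)) (wL (d s))) => // h'.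
    have := Hmono _ _ h'. rewrite /wL !wphi. lia.
  - move=> h. have := Hmono _ _ (ltW h). by rewrite /wL !wphi.
have key2 : forall w, in_Young n r lam w -> forall p, invb r (w \o d) p -> invb r f0 p.
  move=> w Y [s t]. rewrite /invb /= => /andP [/andP [h1 h2] h3].
  rewrite h1 h2 /= -key1 //.
  have := Hmono _ _ (ltW h3). by rewrite !(Young_phi hn hr hL hphi Y).
have ellY : forall w, in_Young n r lam w -> ell r (w \o d) = inv r (w \o d) /\ (inv r (w \o d) <= inv r f0)%N.
  move=> w Y. have [[wb wp] _] := Y.
  have a := affine_comp (conj wb wp) hda.
  split; first exact: ell_inv.
  apply: inv_sub => //; [exact: proj2 a | exact: key2].
split.
  exists f0; split; first by exists wL; split.
  move=> w Y. have [e1 e2] := ellY _ Y. by rewrite e1 (ell_inv hr af0).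
move=> dp [[w [Y e]] hmax].
have edp : dp = w \o d by apply: functional_extensionality.
have := hmax _ YL. rewrite -/f0 (ell_inv hr af0) edp.
have [e1 e2] := ellY _ Y. rewrite e1 => h1.
have eq : inv r (w \o d) = inv r f0 by apply/eqP; rewrite eqn_leq e2 h1.
rewrite eq.
have [sq [u [m sz]]] := has_card_inv hr pf0.
exists sq; split => //; split => // p.
rewrite m /invb /Inv. case: p => s t /=.
split.
- move=> /andP [/andP [h1' h2] h3]. split => //; split => //. rewrite /i key1 //.
- move=> [h1' [h2 h3]]. rewrite h1' h2 /= -key1 //.
Qed.
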